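(* Let $G$ be a finite simple connected graph other than $K_2$ and let $U$ be a subset of the leaves of $G$. Then $\rho\circ\lambda_U(G)$ and $G$ have the same reduction.
   Context: A leaf is a vertex of degree one; two distinct vertices are siblings if they have the same closed neighborhood $N[v]=\{v\}\cup N(v)$. For a graph $G\neq K_2$ and a set $S$ of its leaves, $\lambda_S(G)$ removes the vertices of $S$; $\lambda(G)$ removes all leaves. $\rho(G)$ contracts each maximal group of siblings to a single vertex. The reduction of a connected graph $G\neq K_2$ is $(\rho\circ\lambda)^n(G)$ for $n$ large enough that this graph has neither leaves nor siblings (equivalently, obtained by repeatedly removing all leaves and contracting groups of siblings). Graphs are compared up to isomorphism. *)

(* Defs.v *)
From mathcomp Require Import all_boot.
Set Implicit Arguments. Unset Strict Implicit. Unset Printing Implicit Defensive.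

(* All graphs produced by the operations
   lambda and rho are induced subgraphs of (T, e); they are represented by
   their vertex set A : {set T}. *)

Section Graphs.
Variables (T : finType) (e : rel T).

Definition simple_graph := symmetric e /\ irreflexive e.

Definition nbr (A : {set T}) (v : T) : {set T} := [set u in A | e v u].
Definition cnbr (A : {set T}) (v : T) : {set T} := v |: nbr A v.

Definition leaf (A : {set T}) (v : T) : bool := (v \in A) && (#|nbr A v| == 1).
Definition leaves (A : {set T}) : {set T} := [set v | leaf A v].

Definition siblings (A : {set T}) (u v : T) : bool :=
  [&& u \in A, v \in A, u != v & cnbr A u == cnbr A v].

Definition lambdaS (A S : {set T}) : {set T} := A :\: S.
Definition lambda (A : {set T}) : {set T} := lambdaS A (leaves A).

(* rho : contract each maximal group of siblings to a single vertex; since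
   siblings have the same closed neighbourhood, this amounts to keeping one
   representative (the one of least rank in enum T) of each group. *)
Definition rho (A : {set T}) : {set T} :=
  [set v in A | ~~ [exists u, siblings A u v && (enum_rank u < enum_rank v)]].

Definition reduced (A : {set T}) : bool :=
  [forall v, ~~ leaf A v] && [forall u, forall v, ~~ siblings A u v].

Definition is_reduction (A R : {set T}) : Prop :=
  exists n, R = iter n (fun X => rho (lambda X)) A /\ reduced R.

Definition iso_on (A B : {set T}) : Prop :=
  exists f : T -> T, [/\ {in A &, injective f}, f @: A = B &
                        {in A &, forall u v, e (f u) (f v) = e u v}].

Definition connected_graph : Prop := forall u v : T, connect e u v.

Definition is_K2 : Prop := #|T| = 2 /\ forall u v : T, u != v -> e u v.

End Graphs.

(* Main.v *)
Require Import Defs.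
From mathcomp Require Import all_boot.
Set Implicit Arguments. Unset Strict Implicit. Unset Printing Implicit Defensive.

Section Proof.
Variables (T : finType) (e : rel T).
Hypothesis esym : symmetric e.
Hypothesis eirr : irreflexive e.
Implicit Types (A B C D X S : {set T}) (u v w x y z a b c d s : T).

Definition sib (A : {set T}) u v := [&& u \in A, v \in A & cnbr e A u == cnbr e A v].

Lemma in_nbr A v u : (u \in nbr e A v) = (u \in A) && e v u.
Proof. by rewrite inE. Qed.
Lemma in_cnbr A v u : (u \in cnbr e A v) = (u == v) || (u \in A) && e v u.
Proof. by rewrite !inE. Qed.

Lemma cnbr_refl A v : v \in cnbr e A v.
Proof. by rewrite in_cnbr eqxx. Qed.

Lemma cnbr_sub A v : v \in A -> cnbr e A v \subset A.
Proof. by move=> vA; apply/subsetP=> u; rewrite in_cnbr => /orP[/eqP->|/andP[]]. Qed.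

Lemma cnbr_sym A x y : x \in A -> y \in A -> (x \in cnbr e A y) = (y \in cnbr e A x).
Proof. by move=> xA yA; rewrite !in_cnbr xA yA /= eq_sym esym. Qed.

Lemma e_cnbr A a b : b \in A -> a != b -> e a b = (b \in cnbr e A a).
Proof. by move=> bA ne; rewrite in_cnbr bA eq_sym (negbTE ne). Qed.

Lemma nbr_cnbr A v : nbr e A v = cnbr e A v :\ v.
Proof.
apply/setP=> u; rewrite !inE; case: (u =P v) => [->|_] /=; first by rewrite eirr andbF.
by [].
Qed.

Lemma siblingsE A u v : siblings e A u v = sib A u v && (u != v).
Proof. rewrite /siblings /sib; by case: (u \in A); case: (v \in A); case: (u != v); rewrite /= ?andbF ?andbT. Qed.

Lemma sib_refl A u : u \in A -> sib A u u.
Proof. by move=> uA; rewrite /sib uA eqxx. Qed.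
Lemma sib_sym A u v : sib A u v -> sib A v u.
Proof. by case/and3P=> uA vA /eqP E; rewrite /sib uA vA E eqxx. Qed.
Lemma sib_trans A u v w : sib A u v -> sib A v w -> sib A u w.
Proof. by case/and3P=> uA vA /eqP E; case/and3P=> _ wA /eqP E'; rewrite /sib uA wA E E' eqxx. Qed.
Lemma sibE A u v : sib A u v -> cnbr e A u = cnbr e A v.
Proof. by case/and3P=> _ _ /eqP. Qed.
Lemma sib_in A u v : sib A u v -> (u \in A) /\ (v \in A).
Proof. by case/and3P. Qed.

Lemma sib_adj A a b a' b' : sib A a a' -> sib A b b' -> ~~ sib A a b -> e a b = e a' b'.
Proof.
move=> saa sbb nab.
have [aA a'A] := sib_in saa; have [bA b'A] := sib_in sbb.
have neab : a != b by apply: contra nab => /eqP <-; apply: sib_refl.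
have nea'b : a' != b by apply: contra nab => /eqP E; rewrite -E.
have nea'b' : a' != b'.
  apply: contra nab => /eqP E; apply: (sib_trans saa); rewrite E; exact: sib_sym.
rewrite (e_cnbr bA neab) (sibE saa) -(e_cnbr bA nea'b) esym.
rewrite (e_cnbr a'A); last by rewrite eq_sym.
have nb'a' : b' != a' by rewrite eq_sym.
by rewrite (sibE sbb) -(e_cnbr a'A nb'a') esym.
Qed.

Lemma rho_sub A : rho e A \subset A.
Proof. by apply/subsetP=> v; rewrite inE => /andP[]. Qed.

Lemma rho_rep A x : x \in A ->
  exists2 y, y \in rho e A & sib A x y && (enum_rank y <= enum_rank x).
Proof.
move=> xA.
case: (@arg_minnP _ x (sib A x) (fun y => enum_rank y) (sib_refl xA)) => y sxy ymin.
exists y; last by rewrite sxy ymin // sib_refl.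
have [_ yA] := sib_in sxy.
rewrite inE yA /=; apply/existsP=> [[u /andP[]]].
rewrite siblingsE => /andP[suy _].
have := ymin u (sib_trans sxy (sib_sym suy)).
by rewrite leqNgt => /negbTE ->.
Qed.

Lemma rank_neq (u v : T) : u != v -> (enum_rank u < enum_rank v) || (enum_rank v < enum_rank u).
Proof.
move=> ne; rewrite -neq_ltn; apply: contra ne => /eqP E.
by apply/eqP; apply: enum_rank_inj; apply: val_inj.
Qed.

Lemma rho_uniq A y y' : y \in rho e A -> y' \in rho e A -> sib A y y' -> y = y'.
Proof.
move=> yR y'R s; apply/eqP/negPn/negP=> ne.
case/orP: (rank_neq ne) => lt.
  move: y'R; rewrite inE => /andP[_ /existsP]; apply; exists y.
  by rewrite siblingsE s ne lt.
move: yR; rewrite inE => /andP[_ /existsP]; apply; exists y'.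
by rewrite siblingsE sib_sym // eq_sym ne lt.
Qed.

Definition transv A C := [/\ C \subset A,
  forall x, x \in A -> exists2 c, c \in C & sib A x c &
  forall c c', c \in C -> c' \in C -> sib A c c' -> c = c'].

Lemma transv_rho A : transv A (rho e A).
Proof.
split; first exact: rho_sub.
  by move=> x xA; have [y yR /andP[s _]] := rho_rep xA; exists y.
exact: rho_uniq.
Qed.

Definition isoW (f : T -> T) (A B : {set T}) :=
  [/\ {in A &, injective f}, f @: A = B &
      {in A &, forall u v, e (f u) (f v) = e u v}].

Lemma isoP A B : iso_on e A B <-> exists f, isoW f A B.
Proof. by []. Qed.

Lemma transv_iso A C D : transv A C -> transv A D -> iso_on e C D.
Proof.
case=> CA Crep Cu [DA Drep Du].
pose phi c := odflt c [pick d in D | sib A c d].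
have phiP c : c \in A -> (phi c \in D) /\ sib A c (phi c).
  move=> cA; rewrite /phi; case: pickP => [d /andP[dD s] | none] //=.
  have [d dD s] := Drep c cA; have := none d; by rewrite dD s.
exists phi; split.
- move=> c c' cC c'C E.
  have [_ s] := phiP c (subsetP CA c cC); have [_ s'] := phiP c' (subsetP CA c' c'C).
  apply: Cu => //; apply: (sib_trans s); rewrite E; exact: sib_sym.
- apply/setP=> d; apply/imsetP/idP => [[c cC ->]|dD].
    by have [] := phiP c (subsetP CA c cC).
  have [c cC s] := Crep d (subsetP DA d dD); exists c => //.
  have [pD s'] := phiP c (subsetP CA c cC).
  apply: Du => //; exact: sib_trans s s'.
- move=> u v uC vC.
  have [_ su] := phiP u (subsetP CA u uC); have [_ sv] := phiP v (subsetP CA v vC).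
  case: (u =P v) => [<-|ne]; first by rewrite !eirr.
  symmetry; apply: (sib_adj su sv); apply/negP=> s; apply: ne; exact: (Cu u v uC vC s).
Qed.

Lemma iso_refl A : iso_on e A A.
Proof. by exists id; split=> //; rewrite imset_id. Qed.

Lemma iso_trans A B C : iso_on e A B -> iso_on e B C -> iso_on e A C.
Proof.
case=> f [fi fA fe] [g [gi gB ge]].
have fin x : x \in A -> f x \in B by move=> xA; rewrite -fA imset_f.
exists (g \o f); split.
- by move=> x y xA yA /= /gi E; apply: fi => //; apply: E; apply: fin.
- by rewrite imset_comp fA.
- by move=> u v uA vA /=; rewrite ge ?fe ?fin.
Qed.

Lemma iso_sym A B : iso_on e A B -> iso_on e B A.
Proof.
case=> f [fi fA fe].
pose g y := odflt y [pick x in A | f x == y].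
have gP y : y \in B -> (g y \in A) /\ f (g y) = y.
  move=> yB; rewrite /g; case: pickP => [x /andP[xA /eqP E] | none] //=.
  move: yB; rewrite -fA => /imsetP[x xA E]; have := none x; by rewrite xA E eqxx.
exists g; split.
- move=> x y xB yB E; have [_ <-] := gP x xB; have [_ <-] := gP y yB; by rewrite E.
- apply/setP=> x; apply/imsetP/idP => [[y yB ->]|xA]; first by have [] := gP y yB.
  have fxB : f x \in B by rewrite -fA imset_f.
  exists (f x) => //; have [gA E] := gP _ fxB; by apply: fi.
- move=> u v uB vB; have [uA Eu] := gP u uB; have [vA Ev] := gP v vB.
  by rewrite -fe // Eu Ev.
Qed.

Lemma isoW_restr f A A' B : isoW f A A' -> B \subset A -> isoW f B (f @: B).
Proof.
case=> fi _ fe BA; split=> //.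
  by move=> x y xB yB; apply: fi; apply: (subsetP BA).
by move=> x y xB yB; apply: fe; apply: (subsetP BA).
Qed.


Section IsoInv.
Variables (f : T -> T) (A A' : {set T}).
Hypothesis hf : isoW f A A'.

Lemma fin x : x \in A -> f x \in A'.
Proof. by case: hf => _ <- _ xA; rewrite imset_f. Qed.

Lemma iso_nbr v : v \in A -> nbr e A' (f v) = f @: nbr e A v.
Proof.
case: hf => fi fA fe vA; apply/setP=> y; rewrite in_nbr.
apply/andP/imsetP => [[yA' ev]|[x xn ->]].
  move: yA'; rewrite -fA => /imsetP[x xA E]; exists x => //.
  by rewrite in_nbr xA -fe // -E.
move: xn; rewrite in_nbr => /andP[xA ex]; by rewrite fin // fe.
Qed.

Lemma iso_leaf v : v \in A -> leaf e A' (f v) = leaf e A v.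
Proof.
case: hf => fi fA fe vA; rewrite /leaf vA fin // iso_nbr // card_in_imset //.
by move=> x y; rewrite !in_nbr => /andP[xA _] /andP[yA _]; apply: fi.
Qed.

Lemma iso_lambda : isoW f (lambda e A) (lambda e A').
Proof.
have sub : lambda e A \subset A by apply: subsetDl.
have [fi fl fe] := isoW_restr hf sub; split => //.
apply/setP=> y; rewrite /lambda /lambdaS.
apply/imsetP/idP => [[x] | ].
  rewrite !inE => /andP[nl xA] ->; by rewrite fin // iso_leaf // nl.
rewrite !inE => /andP[nl yA']; move: yA'; case: hf => _ fA _.
rewrite -fA => /imsetP[x xA E]; exists x => //.
by rewrite !inE xA -(iso_leaf xA) -E nl.
Qed.

Lemma iso_cnbr_mem u x : u \in A -> x \in A ->
  (f x \in cnbr e A' (f u)) = (x \in cnbr e A u).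
Proof.
have [fi fA fe] := hf; move=> uA xA; rewrite !in_cnbr (inj_in_eq fi) //.
by rewrite (fin xA) xA fe.
Qed.

Lemma iso_sib u v : u \in A -> v \in A -> sib A' (f u) (f v) = sib A u v.
Proof.
move=> uA vA; rewrite /sib !fin // uA vA /=.
have [fi fA fe] := hf.
apply/eqP/eqP => E; apply/setP => x.
  case xA: (x \in A); first by rewrite -!(iso_cnbr_mem _ xA) // E.
  apply/idP/idP => xc.
    by have := subsetP (cnbr_sub uA) x xc; rewrite xA.
  by have := subsetP (cnbr_sub vA) x xc; rewrite xA.
case xA: (x \in A').
  move: xA; rewrite -{1}fA => /imsetP[y yA ->]; by rewrite !iso_cnbr_mem // E.
apply/idP/idP => xc.
  by have := subsetP (cnbr_sub (fin uA)) x xc; rewrite xA.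
by have := subsetP (cnbr_sub (fin vA)) x xc; rewrite xA.
Qed.

Lemma iso_rho : iso_on e (rho e A) (rho e A').
Proof.
have sub := rho_sub A.
have h1 : iso_on e (rho e A) (f @: rho e A) by exists f; exact: isoW_restr hf sub.
apply: (iso_trans h1); apply: (@transv_iso A'); last exact: transv_rho.
have [fi fA fe] := hf.
split.
- by rewrite -fA; apply: imsetS.
- move=> x; rewrite -{1}fA => /imsetP[a aA ->].
  have [y yR /andP[s _]] := rho_rep aA.
  exists (f y); first by rewrite imset_f.
  by rewrite iso_sib // (subsetP sub).
- move=> c c' /imsetP[a aR ->] /imsetP[b bR ->].
  rewrite iso_sib ?(subsetP sub) // => s; by rewrite (rho_uniq aR bR s).
Qed.

End IsoInv.

Definition F X := rho e (lambda e X).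

Lemma iso_F A A' : iso_on e A A' -> iso_on e (F A) (F A').
Proof. by case=> f hf; apply: iso_rho; exact: iso_lambda hf. Qed.

Lemma iso_iter n A A' : iso_on e A A' -> iso_on e (iter n F A) (iter n F A').
Proof. by move=> h; elim: n => //= n IH; apply: iso_F. Qed.

Lemma F_sub A : F A \subset A.
Proof. apply: subset_trans (rho_sub _) _; exact: subsetDl. Qed.

Lemma reduced_F A : reduced e A -> F A = A.
Proof.
case/andP=> /forallP nl /forallP ns.
have L : lambda e A = A.
  apply/setP=> v; rewrite !inE; by rewrite (negbTE (nl v)).
rewrite /F L; apply/setP=> v; rewrite inE.
case vA: (v \in A) => //=; apply/negP => /existsP[u /andP[s _]].
by have := forallP (ns u) v; rewrite s.
Qed.

Lemma F_reduced A : F A = A -> reduced e A.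
Proof.
move=> E.
have LA : lambda e A = A.
  apply/eqP; rewrite eqEsubset subsetDl /=; rewrite -{1}E; exact: rho_sub.
have RA : rho e A = A by rewrite -{2}E /F LA.
apply/andP; split; apply/forallP => v.
  apply/negP => lv; have vA : v \in A by case/andP: lv.
  by move: vA; rewrite -{1}LA /lambda /lambdaS !inE lv.
apply/forallP => w; apply/negP => s.
move: (s); rewrite siblingsE => /andP[s' ne].
have [vA wA] := sib_in s'.
case/orP: (rank_neq ne) => lt.
  move: wA; rewrite -RA inE => /andP[_ /existsP]; apply; exists v; by rewrite s lt.
move: vA; rewrite -RA inE => /andP[_ /existsP]; apply; exists w.
by rewrite siblingsE sib_sym // eq_sym ne lt.
Qed.

Lemma is_redP A R : is_reduction e A R <-> exists n, R = iter n F A /\ F R = R.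
Proof.
split; case=> n [h1 h2]; exists n; split => //.
  exact: reduced_F.
exact: F_reduced.
Qed.

Lemma iter_fixed n A : F A = A -> iter n F A = A.
Proof. by move=> h; elim: n => //= n ->. Qed.

Lemma iter_fix n A : #|A| <= n -> F (iter n F A) = iter n F A.
Proof.
elim: n A => [|n IH] A hA.
  move: hA; rewrite leqn0 => /eqP/cards0_eq ->.
  by apply/eqP; rewrite eqEsubset F_sub sub0set.
case: (F A =P A) => [h|ne]; first by rewrite iter_fixed.
rewrite iterSr; apply: IH.
have : F A \proper A by rewrite properEneq F_sub andbT; apply/eqP.
move/proper_card => lt; by rewrite -ltnS (leq_trans lt).
Qed.

Lemma red_ex A : exists R, is_reduction e A R.
Proof.
exists (iter #|A| F A); apply/is_redP; exists #|A|; split => //.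
exact: iter_fix.
Qed.

Lemma iter_le n m A : n <= m -> F (iter n F A) = iter n F A -> iter m F A = iter n F A.
Proof. by move=> le h; rewrite -(subnK le) iterD iter_fixed. Qed.

Lemma red_unique A R1 R2 : is_reduction e A R1 -> is_reduction e A R2 -> R1 = R2.
Proof.
move=> /is_redP[n [-> h1]] /is_redP[m [-> h2]].
case: (leqP n m) => le; first by rewrite (iter_le le).
by rewrite (iter_le (ltnW le)).
Qed.

Definition red_iso A B := forall R1 R2,
  is_reduction e A R1 -> is_reduction e B R2 -> iso_on e R1 R2.

Lemma red_iso_of_iso A B : iso_on e A B -> red_iso A B.
Proof.
move=> h R1 R2 /is_redP[n [E1 h1]] /is_redP[m [E2 h2]].
have := iso_iter (maxn n m) h.
rewrite (@iter_le n) ?leq_maxl -?E1 // (@iter_le m) ?leq_maxr -?E2 //.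
Qed.

Lemma red_iso_refl A : red_iso A A.
Proof. apply: red_iso_of_iso; exact: iso_refl. Qed.

Lemma red_iso_sym A B : red_iso A B -> red_iso B A.
Proof. by move=> h R1 R2 h1 h2; apply: iso_sym; apply: h. Qed.

Lemma red_iso_trans A B C : red_iso A B -> red_iso B C -> red_iso A C.
Proof.
move=> h h' R1 R3 h1 h3; have [R2 h2] := red_ex B.
exact: iso_trans (h _ _ h1 h2) (h' _ _ h2 h3).
Qed.

Lemma red_iso_F A : red_iso A (F A).
Proof.
move=> R1 R2 h1 h2; suff -> : R1 = R2 by apply: iso_refl.
refine (red_unique _ h2).
move: h1 => /is_redP[n [E h]]; apply/is_redP; exists n; split => //.
by rewrite -iterSr /= -E h.
Qed.


Lemma in_rho X v : (v \in rho e X) =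
  (v \in X) && ~~ [exists u, siblings e X u v && (enum_rank u < enum_rank v)].
Proof. by rewrite inE. Qed.

Lemma rank_lt u v : u != v -> enum_rank u <= enum_rank v -> enum_rank u < enum_rank v.
Proof.
move=> ne le; rewrite ltn_neqAle le andbT; apply: contra ne => /eqP E.
by apply/eqP; apply: enum_rank_inj; apply: val_inj.
Qed.

Lemma cnbrI C D x : C \subset D -> x \in C -> cnbr e C x = cnbr e D x :&: C.
Proof.
move=> CD xC; apply/setP=> z; rewrite in_setI !in_cnbr.
case: (z =P x) => [->|_] /=; first by rewrite xC.
case zC: (z \in C); last by rewrite andbF.
by rewrite (subsetP CD z zC) andbT.
Qed.

Lemma nbrI C D x : C \subset D -> nbr e C x = nbr e D x :&: C.
Proof.
move=> CD; apply/setP=> z; rewrite in_setI !in_nbr.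
case zC: (z \in C); last by rewrite andbF.
by rewrite (subsetP CD z zC) andbT.
Qed.

Lemma cnbrD B S u : u \notin S -> cnbr e (B :\: S) u = cnbr e B u :\: S.
Proof.
move=> uS; apply/setP=> z; rewrite !inE.
case: (z =P u) => [->|_] /=; first by rewrite uS.
by rewrite andbA.
Qed.

Lemma sib_sub C D x y : C \subset D -> x \in C -> y \in C -> sib D x y -> sib C x y.
Proof.
move=> CD xC yC s; rewrite /sib xC yC !(cnbrI CD) //; by rewrite (sibE s) eqxx.
Qed.

Lemma sib_transv C D x y : C \subset D ->
  (forall z, z \in D -> exists2 z', z' \in C & sib D z z') ->
  x \in C -> y \in C -> sib C x y -> sib D x y.
Proof.
move=> CD H xC yC s.
have E : cnbr e D x :&: C = cnbr e D y :&: C by rewrite -!(cnbrI CD) // (sibE s).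
suff sub : forall a b, a \in C -> b \in C -> cnbr e D a :&: C = cnbr e D b :&: C ->
    cnbr e D a \subset cnbr e D b.
  by rewrite /sib !(subsetP CD) //= eqEsubset !sub.
move=> a b aC bC Eab; apply/subsetP => z za.
have aD := subsetP CD a aC; have bD := subsetP CD b bC.
have zD : z \in D := subsetP (cnbr_sub aD) z za.
case zC: (z \in C).
  have : z \in cnbr e D a :&: C by rewrite inE za zC.
  by rewrite Eab inE => /andP[].
have [z' z'C szz'] := H z zD.
have z'D := subsetP CD z' z'C.
have az : a \in cnbr e D z by rewrite cnbr_sym.
have z'a : z' \in cnbr e D a by rewrite cnbr_sym // -(sibE szz').
have z'b : z' \in cnbr e D b.
  have : z' \in cnbr e D a :&: C by rewrite inE z'a z'C.
  by rewrite Eab inE => /andP[].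
have bz : b \in cnbr e D z by rewrite (sibE szz') cnbr_sym.
by rewrite cnbr_sym.
Qed.

Definition nok2 A := forall v w, leaf e A v -> leaf e A w -> ~~ e v w.

Lemma leaf_nbr A v w : leaf e A v -> w \in nbr e A v -> nbr e A v = [set w].
Proof. by case/andP => _ /cards1P[t Et] wn; move: wn; rewrite Et inE => /eqP->. Qed.

Lemma nok2_rho X : nok2 (rho e X).
Proof.
move=> v w lv lw; apply/negP => evw.
have vR : v \in rho e X by case/andP: lv.
have wR : w \in rho e X by case/andP: lw.
have wn : w \in nbr e (rho e X) v by rewrite in_nbr wR evw.
have vn : v \in nbr e (rho e X) w by rewrite in_nbr vR esym evw.
have Nv := leaf_nbr lv wn.
have Nw := leaf_nbr lw vn.
have s : sib (rho e X) v w by rewrite /sib vR wR /cnbr Nv Nw setUC eqxx.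
have H : forall z, z \in X -> exists2 z', z' \in rho e X & sib X z z'.
  by move=> z zX; have [y yR /andP[sy _]] := rho_rep zX; exists y.
have s' := sib_transv (rho_sub X) H vR wR s.
have E := rho_uniq vR wR s'.
by move: evw; rewrite E eirr.
Qed.

Definition good B s := (s \in B) /\ exists w, nbr e B s = [set w] /\ ~~ leaf e B w.

Section L1.
Variables (B S : {set T}).
Hypothesis hS : forall s, s \in S -> good B s.

Lemma good_nosib s u : s \in S -> sib B s u -> u = s.
Proof.
move=> sS ssu; have [sB [w [Nw nlw]]] := hS sS.
have : w \in nbr e B s by rewrite Nw inE.
rewrite in_nbr => /andP[wB esw].
have ne : s != w by apply: contraTneq esw => ->; rewrite eirr.
have us : u \in cnbr e B s by rewrite (sibE ssu) cnbr_refl.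
move: us; rewrite /cnbr Nw !inE => /orP[/eqP//|/eqP uw].
exfalso; move/negP: nlw; apply.
rewrite /leaf wB nbr_cnbr -uw -(sibE ssu) /cnbr Nw uw.
apply/cards1P; exists s; apply/setP => z; rewrite !inE.
case: (z =P w) => [->|_] /=; first by rewrite eq_sym (negbTE ne).
by rewrite orbF.
Qed.

Lemma L1b s : s \in S -> leaf e (rho e B) s.
Proof.
move=> sS; have [sB [w [Nw nlw]]] := hS sS.
have : w \in nbr e B s by rewrite Nw inE.
rewrite in_nbr => /andP[wB esw].
have ne : s != w by apply: contraTneq esw => ->; rewrite eirr.
have sR : s \in rho e B.
  rewrite in_rho sB /=; apply/existsP => [[u /andP[]]].
  rewrite siblingsE => /andP[sus neu] _.
  by move: neu; rewrite (good_nosib sS (sib_sym sus)) eqxx.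
have wR : w \in rho e B.
  rewrite in_rho wB /=; apply/existsP => [[u /andP[]]].
  rewrite siblingsE => /andP[suw neu] _.
  have [uB _] := sib_in suw.
  have : s \in cnbr e B w by rewrite in_cnbr sB esym esw orbT.
  rewrite -(sibE suw) cnbr_sym // /cnbr Nw !inE => /orP[/eqP us|/eqP uw].
    by move: suw; rewrite us => /(good_nosib sS) E; move: ne; rewrite E eqxx.
  by move: neu; rewrite uw eqxx.
rewrite /leaf sR (nbrI _ (rho_sub B)) Nw.
have -> : [set w] :&: rho e B = [set w] by apply/setIidPl; rewrite sub1set.
by rewrite cards1.
Qed.

Lemma L1a : rho e (B :\: S) = rho e (rho e B :\: S).
Proof.
set D := B :\: S; set C := rho e B :\: S.
have CD : C \subset D by apply: setSD; exact: rho_sub.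
have F1 x y : x \notin S -> y \notin S -> sib B x y -> sib D x y.
  move=> xS yS s; have [xB yB] := sib_in s.
  by rewrite /sib /D !inE xS yS xB yB !cnbrD // (sibE s) eqxx.
have H : forall z, z \in D -> exists2 z', z' \in C & sib D z z'.
  move=> z; rewrite /D inE => /andP[zS zB].
  have [y yR /andP[szy _]] := rho_rep zB.
  have yS : y \notin S.
    apply/negP => yS; have E := good_nosib yS (sib_sym szy).
    by move: zS; rewrite E yS.
  by exists y; [rewrite /C inE yS yR | apply: F1].
have F2 x y : x \in C -> y \in C -> sib C x y = sib D x y.
  move=> xC yC; apply/idP/idP; first exact: sib_transv.
  exact: sib_sub.
apply/setP => v; apply/idP/idP.
  rewrite in_rho => /andP[vD nex].
  have vC : v \in C.
    move: (vD); rewrite /D inE => /andP[vS vB].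
    have [y yR /andP[svy le]] := rho_rep vB.
    case: (y =P v) => [yv|neyv].
      by rewrite /C inE vS -yv yR.
    have yS : y \notin S.
      apply/negP => yS; have E := good_nosib yS (sib_sym svy).
      by apply: neyv.
    exfalso; move/negP: nex; apply; apply/existsP; exists y.
    rewrite siblingsE (F1 _ _ yS vS (sib_sym svy)) /=.
    have nyv : y != v by apply/eqP.
    by rewrite nyv rank_lt.
  rewrite in_rho vC /=; apply: contra nex => /existsP[u /andP[su lt]].
  apply/existsP; exists u; move: su; rewrite !siblingsE => /andP[su ne].
  have [uC _] := sib_in su.
  by rewrite -F2 // su ne lt.
rewrite in_rho => /andP[vC nex].
rewrite in_rho (subsetP CD v vC) /=.
apply/existsP => [[u /andP[]]]; rewrite siblingsE => /andP[su ne] lt.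
move/negP: nex; apply.
have [uD _] := sib_in su.
move: (uD); rewrite /D inE => /andP[uS uB].
have [u' u'R /andP[suu' le]] := rho_rep uB.
have u'S : u' \notin S.
  apply/negP => u'S; have E := good_nosib u'S (sib_sym suu').
  by move: uS; rewrite E u'S.
have u'C : u' \in C by rewrite /C inE u'S u'R.
have s1 : sib D u' v := sib_trans (sib_sym (F1 _ _ uS u'S suu')) su.
have lt' : enum_rank u' < enum_rank v := leq_ltn_trans le lt.
have ne' : u' != v by apply: contraTneq lt' => ->; rewrite ltnn.
apply/existsP; exists u'; by rewrite siblingsE F2 // s1 ne' lt'.
Qed.

End L1.

Lemma rho_transv_super X X' : X \subset X' ->
  (forall z, z \in X' -> exists2 z', z' \in X & sib X' z z') -> transv X' (rho e X).
Proof.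
move=> XX' H; split.
- exact: subset_trans (rho_sub X) XX'.
- move=> x xX'; have [z' z'X s] := H x xX'.
  have [c cR /andP[s' _]] := rho_rep z'X.
  have cX := subsetP (rho_sub X) c cR.
  exists c => //; apply: (sib_trans s); exact: sib_transv XX' H z'X cX s'.
- move=> c c' cR c'R s; apply: (rho_uniq cR c'R).
  have cX := subsetP (rho_sub X) c cR; have c'X := subsetP (rho_sub X) c' c'R.
  exact: (sib_sub XX' cX c'X s).
Qed.


Lemma main n : forall A, #|A| < n -> nok2 A -> forall S, S \subset leaves e A ->
  red_iso (rho e (A :\: S)) A.
Proof.
elim: n => [//|n IH] A hA nA S hS.
case: (rho e (A :\: S) =P A) => [->|neq]; first exact: red_iso_refl.
set B := rho e (A :\: S).
have BA : B \subset A := subset_trans (rho_sub _) (subsetDl A S).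
have hB : #|B| < n.
  have : B \proper A by rewrite properEneq BA andbT; apply/eqP.
  move/proper_card => lt; apply: leq_trans lt _; by rewrite -ltnS.
have hSl v : v \in S -> leaf e A v by move=> vS; have := subsetP hS v vS; rewrite inE.
set B0 := A :\: S.
have B0A : B0 \subset A by apply: subsetDl.
set S' := leaves e A :\: S.
set S'' := [set v in S' | [forall w, (w \in nbr e B0 v) ==> ~~ leaf e B0 w]].
set X := B0 :\: S'.
set X' := B0 :\: S''.
have leafB0 v : v \in S' -> exists w, [/\ nbr e B0 v = [set w], w \in B0,
    ~~ leaf e A w, e v w & v \in B0].
  rewrite /S' !inE => /andP[vS lv].
  have vA : v \in A by case/andP: lv.
  case/andP: (lv) => _ /cards1P[w Nw].
  have : w \in nbr e A v by rewrite Nw inE.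
  rewrite in_nbr => /andP[wA evw].
  have nlw : ~~ leaf e A w by apply: contraL evw => lw; apply: nA.
  have wS : w \notin S by apply: contra nlw; apply: hSl.
  have wB0 : w \in B0 by rewrite /B0 inE wS wA.
  have vB0 : v \in B0 by rewrite /B0 inE vS vA.
  exists w; split; [|done|done|done|by rewrite vS vA].
  rewrite (nbrI _ B0A) Nw; apply/setIidPl; by rewrite sub1set.
have S''S' : S'' \subset S' by apply/subsetP => t; rewrite inE => /andP[].
have XX' : X \subset X' by apply: setDS.
have X'B0 : X' \subset B0 by apply: subsetDl.
have FA : F A = rho e X.
  rewrite /F /lambda /lambdaS /X /B0 /S'; congr rho; apply/setP => t; rewrite !inE.
  case tS: (t \in S) => /=; last by [].
  by rewrite hSl.
have H : forall z, z \in X' -> exists2 z', z' \in X & sib X' z z'.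
  move=> z zX'; case zS': (z \in S').
    have [w [NB0 wB0 nlw ezw zB0]] := leafB0 z zS'.
    have zS'' : z \notin S'' by move: zX'; rewrite /X' inE => /andP[].
    have lw : leaf e B0 w.
      move: zS''; rewrite inE zS' /= negb_forall => /existsP[x].
      rewrite negb_imply negbK => /andP[]; by rewrite NB0 inE => /eqP->.
    have wS' : w \notin S' by rewrite /S' !inE negb_and (negbTE nlw) orbT.
    have wX : w \in X by rewrite /X inE wS' wB0.
    have wX' := subsetP XX' w wX.
    have zn : z \in nbr e B0 w by rewrite in_nbr zB0 esym ezw.
    have NBw := leaf_nbr lw zn.
    exists w => //.
    by rewrite /sib zX' wX' !(cnbrI X'B0) ?wX' // /cnbr NB0 NBw setUC eqxx.
  exists z; last exact: (sib_refl zX').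
  by rewrite /X inE zS' (subsetP X'B0 z zX').
have isoX : iso_on e (rho e X) (rho e X').
  exact: transv_iso (rho_transv_super XX' H) (transv_rho X').
have goodS'' : forall s, s \in S'' -> good B0 s.
  move=> s; rewrite inE => /andP[sS' /forallP fw].
  have [w [NB0 wB0 nlw esw sB0]] := leafB0 s sS'.
  split => //; exists w; split => //.
  by have := fw w; rewrite NB0 inE eqxx.
have EX' : rho e X' = rho e (B :\: S'') by rewrite /X' (L1a goodS'').
have hS'' : S'' \subset leaves e B.
  by apply/subsetP => s sS; rewrite inE; apply: L1b goodS'' s sS.
have IHB := IH B hB (@nok2_rho _) S'' hS''.
apply: red_iso_sym.
refine (red_iso_trans (red_iso_F (A:=A)) _); rewrite FA.
refine (red_iso_trans (red_iso_of_iso isoX) _); rewrite EX'.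
exact: IHB.
Qed.

Lemma nok2_T : connected_graph e -> ~ is_K2 e -> nok2 [set: T].
Proof.
move=> conn nK v w lv lw; apply/negP => evw; apply: nK.
have wn : w \in nbr e [set: T] v by rewrite in_nbr in_setT evw.
have vn : v \in nbr e [set: T] w by rewrite in_nbr in_setT esym evw.
have Nv := leaf_nbr lv wn; have Nw := leaf_nbr lw vn.
pose a := [set v; w].
have cl : forall x y, x \in a -> e x y -> y \in a.
  move=> x y; rewrite !inE => /orP[/eqP->|/eqP->] exy.
    have : y \in nbr e [set: T] v by rewrite in_nbr in_setT exy.
    by rewrite Nv inE => /eqP->; rewrite eqxx orbT.
  have : y \in nbr e [set: T] w by rewrite in_nbr in_setT exy.
  by rewrite Nw inE => /eqP->; rewrite eqxx.
have gen : forall p x, x \in a -> path e x p -> last x p \in a.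
  elim=> [|y p IHp] x xa //=; case/andP=> exy pth; apply: IHp pth; exact: cl exy.
have all : forall u, u \in a.
  move=> u; have /connectP[p pth ->] := conn v u.
  by apply: gen pth; rewrite !inE eqxx.
have ne : v != w by apply: contraTneq evw => ->; rewrite eirr.
split.
  rewrite -cardsT; have -> : [set: T] = a by apply/setP => u; rewrite inE all.
  by rewrite cards2 ne.
move=> u u' neu; move: neu (all u) (all u'); rewrite !inE.
move=> neu /orP[]/eqP Eu /orP[]/eqP Eu'; subst u u'.
- by rewrite eqxx in neu.
- exact: evw.
- by rewrite esym.
- by rewrite eqxx in neu.
Qed.

End Proof.

Theorem corollary5p3 (T : finType) (e : rel T) (U : {set T}) :
  simple_graph e -> connected_graph e -> ~ is_K2 e ->
  U \subset leaves e [set: T] ->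
  (exists R1, is_reduction e [set: T] R1) /\
  (exists R2, is_reduction e (rho e (lambdaS [set: T] U)) R2) /\
  (forall R1 R2, is_reduction e [set: T] R1 ->
     is_reduction e (rho e (lambdaS [set: T] U)) R2 -> iso_on e R1 R2).
Proof.
move=> [esym eirr] conn nK hU.
split; first exact: red_ex.
split; first exact: red_ex.
move=> R1 R2 h1 h2.
have nT := nok2_T esym eirr conn nK.
have M := main esym eirr (ltnSn #|[set: T]|) nT hU.
apply: iso_sym; exact: M h2 h1.
Qed.
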